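(* Let $p$ be a prime and $n, k$ positive integers, $d = \gcd(n,k)$. Let $L(X) = \sum_{i=0}^t \alpha_i X^{p^i}$, $\alpha_i \in \mathbb{F}_p$, be a $p$-linearized polynomial without multiple roots, and let $L'$ be a $p$-linearized polynomial over $\mathbb{F}_p$ with $X - X^{p^k} = L \circ L'(X)$. Let $l'$ be the conventional $p$-associate of $L'$, let $w = (l', t_d^k)$, $u = l'/w$, and let $U$ be the linearized $p$-associate of $u$. Then $$\ker(L) \cap \mathbb{F}_{p^n} = U(\mathbb{F}_{p^d}).$$
   Context: For positive integers $d \mid k$, $t_d^k(X) = \sum_{i=0}^{k/d-1} X^{di} \in \mathbb{F}_p[X]$. For $l(X) = \sum \alpha_i X^i \in \mathbb{F}_p[X]$, its linearized $p$-associate is $\sum \alpha_i X^{p^i}$, and conversely $l$ is the conventional $p$-associate of that linearized polynomial. $(f,g)$ denotes the monic gcd in $\mathbb{F}_p[X]$. $\ker(L)$ is the set of roots of $L$ in an algebraic closure of $\mathbb{F}_p$; $U(\mathbb{F}_{p^d}) = \{U(x): x \in \mathbb{F}_{p^d}\}$. *)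

(* Defs.v *)
From mathcomp Require Import all_boot all_algebra all_field.
Set Implicit Arguments. Unset Strict Implicit. Unset Printing Implicit Defensive.
Import GRing.Theory.
Local Open Scope ring_scope.

Definition Fp_to (p : nat) (E : nzRingType) (a : 'F_p) : E := (nat_of_ord a)%:R.

Definition lin_poly (p : nat) (R : nzRingType) (l : {poly R}) : {poly R} :=
  \sum_(i < size l) l`_i *: 'X^(p ^ i).

Definition lin_eval (p : nat) (E : nzRingType) (l : {poly 'F_p}) (x : E) : E :=
  \sum_(i < size l) Fp_to E l`_i * x ^+ (p ^ i).

Definition tpoly (R : nzRingType) (d k : nat) : {poly R} :=
  \sum_(i < k %/ d) 'X^(d * i).

Definition gcd_monic (R : fieldType) (f g : {poly R}) : {poly R} :=
  (lead_coef (gcdp f g))^-1 *: gcdp f g.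

(* Main.v *)
Require Import Defs.
From mathcomp Require Import all_boot all_algebra all_field.
From mathcomp Require Import ring.
Set Implicit Arguments. Unset Strict Implicit. Unset Printing Implicit Defensive.
Import GRing.Theory.
Local Open Scope ring_scope.
Section LinEval.
Variables (p : nat) (R : comNzRingType).
Hypothesis charR : p \in [pchar R].

Lemma pr_p : prime p. Proof. exact: pcharf_prime charR. Qed.

Lemma natr_modp n : (n %% p)%:R = n%:R :> R.
Proof. by rewrite {2}(divn_eq n p) natrD natrM (pcharf0 charR) mulr0 add0r. Qed.

Lemma charnat i : [pchar R].-nat (p ^ i)%N.
Proof.
rewrite pnatX; apply/orP; left.
rewrite (eq_pnat _ (pcharf_eq charR)); exact: pnat_id pr_p.
Qed.

Lemma frobD i x y : (x + y) ^+ (p ^ i) = x ^+ (p ^ i) + y ^+ (p ^ i) :> R.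
Proof. exact: exprDn_pchar (charnat i). Qed.

Lemma frobN i x : (- x) ^+ (p ^ i) = - x ^+ (p ^ i) :> R.
Proof. exact: exprNn_pchar (charnat i). Qed.

Lemma frob0 i : (0 : R) ^+ (p ^ i) = 0.
Proof. by rewrite expr0n expn_eq0 eqn0Ngt (prime_gt0 pr_p). Qed.

Lemma natr_modq n : (n %% (Zp_trunc (pdiv p)).+2)%:R = n%:R :> R.
Proof. by rewrite Fp_cast ?pr_p // natr_modp. Qed.

Lemma Fp_val_add (a b : 'F_p) : val (a + b) = ((val a + val b) %% (Zp_trunc (pdiv p)).+2)%N.
Proof. by []. Qed.

Lemma Fp_val_mul (a b : 'F_p) : val (a * b) = ((val a * val b) %% (Zp_trunc (pdiv p)).+2)%N.
Proof. by []. Qed.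

Lemma Fp_val_lt (a : 'F_p) : (val a < p)%N.
Proof. by case: a => /= m; rewrite Fp_cast ?pr_p. Qed.

Lemma Fp_toD (a b : 'F_p) : Fp_to R (a + b) = Fp_to R a + Fp_to R b.
Proof. by rewrite /Fp_to Fp_val_add natr_modq natrD. Qed.

Lemma Fp_toM (a b : 'F_p) : Fp_to R (a * b) = Fp_to R a * Fp_to R b.
Proof. by rewrite /Fp_to Fp_val_mul natr_modq natrM. Qed.

Lemma Fp_to0 : Fp_to R (0 : 'F_p) = 0.
Proof. by []. Qed.

Lemma Fp_to1 : Fp_to R (1 : 'F_p) = 1.
Proof. by rewrite /Fp_to /= natr_modq. Qed.

Lemma Fp_toN (a : 'F_p) : Fp_to R (- a) = - Fp_to R a.
Proof. by apply/eqP; rewrite -subr_eq0 opprK -Fp_toD addNr. Qed.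

Lemma Fp_to_neq0 (a : 'F_p) : a != 0 -> Fp_to R a != 0.
Proof.
move=> a0; rewrite /Fp_to -(dvdn_pcharf charR).
apply/negP => /dvdnP [q hq].
move: (Fp_val_lt a) => /=; rewrite hq; case: q hq => [|q] hq.
  by move=> _; move/negP: a0; apply; apply/eqP; apply: val_inj; rewrite /= hq.
by rewrite mulSn ltnNge leq_addr.
Qed.

Lemma Fp_to_frob (a : 'F_p) i : Fp_to R a ^+ (p ^ i) = Fp_to R a.
Proof.
elim: i => [|i IH]; first by rewrite expn0 expr1.
by rewrite expnSr exprM IH /Fp_to -(pFrobenius_autE charR) pFrobenius_aut_nat.
Qed.

End LinEval.
Section LinEval2.
Variables (p : nat) (R : comNzRingType).
Hypothesis charR : p \in [pchar R].
Local Notation LE := (@lin_eval p R).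

Lemma lin_evalE (l : {poly 'F_p}) x m : (size l <= m)%N ->
  LE l x = \sum_(i < m) Fp_to R l`_i * x ^+ (p ^ i).
Proof.
move=> hm; rewrite /lin_eval (big_ord_widen _ (fun i => Fp_to R l`_i * x ^+ (p ^ i)) hm).
rewrite big_mkcond; apply: eq_bigr => i _; case: ifP => // /negbT; rewrite -leqNgt => hi.
by rewrite nth_default // mul0r.
Qed.
Arguments lin_evalE : clear implicits.

Lemma lin_evalD f g x : LE (f + g) x = LE f x + LE g x.
Proof.
set m := maxn (size f) (size g).
rewrite (lin_evalE _ x _ (size_polyD f g)) (lin_evalE f x m) ?leq_maxl //.
rewrite (lin_evalE g x m) ?leq_maxr // -big_split; apply: eq_bigr => i _.
by rewrite coefD (Fp_toD charR) mulrDl.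
Qed.

Lemma lin_evalZ c f x : LE (c *: f) x = Fp_to R c * LE f x.
Proof.
rewrite (lin_evalE _ x _ (size_scale_leq c f)) /lin_eval mulr_sumr; apply: eq_bigr => i _.
by rewrite coefZ (Fp_toM charR) mulrA.
Qed.

Lemma lin_eval0 x : LE 0 x = 0.
Proof. by rewrite /lin_eval size_poly0 big_ord0. Qed.

Lemma lin_evalN f x : LE (- f) x = - LE f x.
Proof. by apply/eqP; rewrite -subr_eq0 opprK -lin_evalD addNr lin_eval0. Qed.

Lemma lin_evalB f g x : LE (f - g) x = LE f x - LE g x.
Proof. by rewrite lin_evalD lin_evalN. Qed.

Lemma lin_eval_sum (I : Type) (r : seq I) (P : pred I) (F : I -> {poly 'F_p}) x :
  LE (\sum_(i <- r | P i) F i) x = \sum_(i <- r | P i) LE (F i) x.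
Proof.
exact: (big_morph (fun f => LE f x) (fun f g => lin_evalD f g x) (lin_eval0 x)).
Qed.

Lemma lin_evalXn j x : LE 'X^j x = x ^+ (p ^ j).
Proof.
rewrite /lin_eval size_polyXn big_ord_recr /= coefXn eqxx (Fp_to1 charR) mul1r big1 ?add0r //.
by move=> i _; rewrite coefXn (ltn_eqF (ltn_ord i)) mul0r.
Qed.

Lemma lin_eval1 x : LE 1 x = x.
Proof. by rewrite -(expr0 'X) lin_evalXn expn0 expr1. Qed.

Lemma lin_evalC c x : LE c%:P x = Fp_to R c * x.
Proof. by rewrite -alg_polyC lin_evalZ lin_eval1. Qed.

Lemma lin_eval_addx f x y : LE f (x + y) = LE f x + LE f y.
Proof.
rewrite /lin_eval -big_split; apply: eq_bigr => i _.
by rewrite (frobD charR) mulrDr.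
Qed.

Lemma lin_eval_0x f : LE f 0 = 0.
Proof. by rewrite /lin_eval big1 // => i _; rewrite (frob0 charR) mulr0. Qed.

Lemma lin_eval_sumx (I : Type) (r : seq I) (P : pred I) (F : I -> R) f :
  LE f (\sum_(i <- r | P i) F i) = \sum_(i <- r | P i) LE f (F i).
Proof.
exact: (big_morph (fun x => LE f x) (fun x y => lin_eval_addx f x y) (lin_eval_0x f)).
Qed.

Lemma lin_eval_scx f (c : 'F_p) y : LE f (Fp_to R c * y) = Fp_to R c * LE f y.
Proof.
rewrite /lin_eval mulr_sumr; apply: eq_bigr => i _.
by rewrite exprMn (Fp_to_frob charR) mulrCA.
Qed.

Lemma frob_sum j (I : Type) (r : seq I) (P : pred I) (F : I -> R) :
  (\sum_(i <- r | P i) F i) ^+ (p ^ j) = \sum_(i <- r | P i) (F i) ^+ (p ^ j).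
Proof.
exact: (big_morph (fun x : R => x ^+ (p ^ j)) (frobD charR j) (frob0 charR j)).
Qed.

Lemma lin_eval_frob f x j : LE f (x ^+ (p ^ j)) = (LE f x) ^+ (p ^ j).
Proof.
rewrite /lin_eval frob_sum; apply: eq_bigr => i _.
by rewrite exprMn (Fp_to_frob charR) -!exprM mulnC.
Qed.

Lemma lin_eval_mulXn f j x : LE (f * 'X^j) x = LE f (x ^+ (p ^ j)).
Proof.
have hs : (size (f * 'X^j)%R <= j + size f)%N.
  have [->|f0] := eqVneq f 0; first by rewrite mul0r size_poly0.
  by rewrite size_mulXn.
rewrite (lin_evalE _ x _ hs) big_split_ord /= big1 ?add0r; last first.
  by move=> i _; rewrite coefMXn /= ltn_ord mul0r.
rewrite /lin_eval; apply: eq_bigr => i _.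
by rewrite coefMXn /= ltnNge leq_addr /= addKn expnD exprM -!exprM mulnC.
Qed.

Lemma lin_eval_mul f g x : LE (f * g) x = LE f (LE g x).
Proof.
rewrite -{1}(coefK g) poly_def mulr_sumr lin_eval_sum [lin_eval g x]/lin_eval lin_eval_sumx.
apply: eq_bigr => i _.
by rewrite -scalerAr lin_evalZ lin_eval_mulXn lin_eval_scx.
Qed.

End LinEval2.
Section PolyId.
Variables (p : nat).
Hypothesis pp : prime p.

Lemma charP : p \in [pchar {poly 'F_p}].
Proof. by rewrite pchar_poly pchar_Fp. Qed.

Lemma Fp_to_poly (a : 'F_p) : Fp_to {poly 'F_p} a = a%:P.
Proof. by rewrite /Fp_to -polyC_natr natr_Zp. Qed.

Lemma lin_poly_comp (f Q : {poly 'F_p}) : lin_poly p f \Po Q = lin_eval f Q.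
Proof.
rewrite /lin_poly linear_sum /lin_eval; apply: eq_bigr => i _.
by rewrite linearZ /= rmorphXn /= comp_polyX Fp_to_poly mul_polyC.
Qed.

Lemma lin_poly_eval (f : {poly 'F_p}) : lin_poly p f = lin_eval f 'X.
Proof. by rewrite -lin_poly_comp comp_polyXr. Qed.

Lemma coef_lin_poly (h : {poly 'F_p}) i : (lin_poly p h)`_(p ^ i) = h`_i.
Proof.
rewrite /lin_poly coef_sum.
under eq_bigr => j _ do rewrite coefZ coefXn eqn_exp2l ?prime_gt1 //.
have [hi|hi] := ltnP i (size h).
  rewrite (bigD1 (Ordinal hi)) //= eqxx mulr1 big1 ?addr0 // => j hj.
  suff -> : (i == j) = false by rewrite mulr0.
  apply/negbTE; apply: contra hj => /eqP e; apply/eqP; apply: val_inj; by rewrite /= e.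
rewrite nth_default // big1 // => j _.
by rewrite (gtn_eqF (leq_trans (ltn_ord j) hi)) mulr0.
Qed.

Lemma lin_poly_inj (f g : {poly 'F_p}) : lin_poly p f = lin_poly p g -> f = g.
Proof.
move=> h; apply/polyP => i; by rewrite -[f`_i]coef_lin_poly -[g`_i]coef_lin_poly h.
Qed.

Lemma poly_identity (l l' : {poly 'F_p}) k :
  'X - 'X^(p ^ k) = lin_poly p l \Po lin_poly p l' -> l * l' = 1 - 'X^k.
Proof.
move=> H; apply: lin_poly_inj.
transitivity ('X - 'X^(p ^ k) : {poly 'F_p}).
  by rewrite H lin_poly_comp !lin_poly_eval (lin_eval_mul charP).
by rewrite lin_poly_eval (lin_evalB charP) (lin_eval1 charP) (lin_evalXn charP).
Qed.

End PolyId.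
Section PolyFacts.
Variable F : fieldType.

Lemma tpoly_mul d k : (d %| k)%N ->
  tpoly F d k * ('X^d - 1) = 'X^k - 1.
Proof.
move=> dk; rewrite /tpoly.
have -> : ('X^k : {poly F}) = 'X^(d * (k %/ d)) by rewrite mulnC divnK.
elim: (k %/ d)%N => [|m IH]; first by rewrite big_ord0 mul0r muln0 expr0 subrr.
rewrite big_ord_recr /= mulrDl IH mulrBr mulr1 -exprD.
rewrite mulnS addnC.
by rewrite addrC addrA subrK.
Qed.

Lemma poly_facts (l l' : {poly F}) d k :
  (0 < d)%N -> (d %| k)%N -> (0 < k)%N -> l * l' = 1 - 'X^k ->
  let w := gcd_monic l' (tpoly F d k) in
  let u := l' %/ w in
  u != 0 /\
  exists t' a b : {poly F},
    l * u = - (t' * ('X^d - 1)) /\ 'X^d - 1 = (a * ('X^d - 1) - b * l) * u.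
Proof.
move=> d0 dk k0 Hll w u.
have nzlp : l' != 0.
  apply/eqP => e; move: Hll; rewrite e mulr0 => /eqP; apply/negP.
  apply/eqP => /(congr1 (fun q : {poly F} => q`_0)).
  by rewrite coefB coef1 coefXn eqxx coef0 (ltn_eqF k0) subr0 => /eqP; rewrite eq_sym oner_eq0.
set t := tpoly F d k.
set g := gcdp l' t.
have g0 : g != 0 by rewrite gcdp_eq0 negb_and nzlp.
set c := (lead_coef g)^-1.
have c0 : c != 0 by rewrite invr_eq0 lead_coef_eq0.
have wE : w = c *: g by [].
have w0 : w != 0 by rewrite wE scaler_eq0 negb_or c0 g0.
have wl' : w %| l' by rewrite wE dvdpZl // dvdp_gcdl.
have wt : w %| t by rewrite wE dvdpZl // dvdp_gcdr.
set t' := t %/ w.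
have ul' : u * w = l' by rewrite divpK.
have tt' : t' * w = t by rewrite divpK.
have u0 : u != 0 by apply: contra_neq nzlp => e; rewrite -ul' e mul0r.
split => //.
have cop : coprimep u t'.
  rewrite /u /t' wE !divpZr //.
  have c1 : c^-1 != 0 by rewrite invr_eq0.
  rewrite (coprimepZl _ _ c1) (coprimepZr _ _ c1).
  by apply: coprimep_div_gcd; rewrite nzlp.
have [[a b] /= Hab] := Bezout_eq1_coprimepP _ _ cop.
have Hlu : l * u = - (t' * ('X^d - 1)).
  apply: (mulIf w0).
  have e : (1 - 'X^k : {poly F}) = - (t * ('X^d - 1)) by rewrite tpoly_mul // opprB.
  rewrite -mulrA ul' Hll e -tt'; ring.
exists t', a, b; split => //.
have e : t' * ('X^d - 1) = - (l * u) by rewrite Hlu opprK.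
transitivity ((a * u + b * t') * ('X^d - 1)); first by rewrite Hab mul1r.
rewrite mulrDl -(mulrA b) e; ring.
Qed.

End PolyFacts.
Section Closed.
Variables (p : nat) (E : closedFieldType).
Hypothesis charE : p \in [pchar E].
Local Notation LE := (@lin_eval p E).

Lemma frob_iter (z : E) a m : z ^+ (p ^ a) = z -> z ^+ (p ^ (a * m)) = z.
Proof.
move=> h; elim: m => [|m IH]; first by rewrite muln0 expn0 expr1.
by rewrite mulnS expnD exprM h IH.
Qed.

Lemma frob_gcd (z : E) a b : (0 < a)%N -> z ^+ (p ^ a) = z -> z ^+ (p ^ b) = z ->
  z ^+ (p ^ gcdn a b) = z.
Proof.
move=> a0 ha hb; case: (egcdnP b a0) => km kn Heq _.
have := frob_iter km ha; rewrite mulnC Heq expnD exprM mulnC frob_iter //.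
Qed.

Lemma lin_eval_onto (u : {poly 'F_p}) (y : E) : u != 0 -> exists x, LE u x = y.
Proof.
move=> u0.
pose P := \sum_(i < size u) Fp_to E u`_i *: 'X^(p ^ i) - y%:P.
have hP x : P.[x] = LE u x - y.
  rewrite /P hornerD hornerN hornerC horner_sum /lin_eval; congr (_ - _).
  by apply: eq_bigr => i _; rewrite hornerZ hornerXn.
have su : (0 < size u)%N by rewrite size_poly_gt0.
set s := (size u).-1.
have ss : (s < size u)%N by rewrite /s prednK.
have cP : P`_(p ^ s) = Fp_to E u`_s.
  rewrite /P coefB coefC expn_eq0 eqn0Ngt (prime_gt0 (pr_p charE)) /= subr0 coef_sum.
  rewrite (bigD1 (Ordinal ss)) //= coefZ coefXn eqxx mulr1 big1 ?addr0 // => j hj.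
  rewrite coefZ coefXn eqn_exp2l ?prime_gt1 ?(pr_p charE) //.
  suff -> : (s == j) = false by rewrite mulr0.
  apply/negbTE; apply: contra hj => /eqP e; apply/eqP; apply: val_inj; by rewrite /= e.
have nz : P`_(p ^ s) != 0.
  rewrite cP; apply: (Fp_to_neq0 charE).
  by rewrite /s -lead_coefE lead_coef_eq0.
have : (1 < size P)%N.
  apply: (@leq_trans (p ^ s).+1).
    by rewrite ltnS expn_gt0 (prime_gt0 (pr_p charE)).
  rewrite ltnNge; apply/negP => h; move/negP: nz; apply; apply/eqP; exact: nth_default.
move=> sP; have /closed_rootP [x rx] : size P != 1 by rewrite neq_ltn sP orbT.
exists x; apply/eqP; rewrite -subr_eq0 -hP; exact: rx.
Qed.

End Closed.

Unset Implicit Arguments.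

Theorem lemma2 (p n k : nat) (E : closedFieldType) (l l' : {poly 'F_p}) :
  prime p -> (0 < n)%N -> (0 < k)%N -> p \in [pchar E] ->
  separable_poly (lin_poly p l) ->
  'X - 'X^(p ^ k) = lin_poly p l \Po lin_poly p l' ->
  let d := gcdn n k in
  let w := gcd_monic l' (tpoly _ d k) in
  let u := l' %/ w in
  forall y : E,
    (@lin_eval p E l y = 0 /\ y ^+ (p ^ n) = y) <->
    (exists2 x : E, x ^+ (p ^ d) = x & y = @lin_eval p E u x).
Proof.
move=> pp n0 k0 charE _ H d w u y.
have Hll := poly_identity pp H.
have d0 : (0 < d)%N by rewrite gcdn_gt0 n0.
have dk : (d %| k)%N by apply: dvdn_gcdr.
have dn : (d %| n)%N by apply: dvdn_gcdl.
have [u0 [t' [a [b [Hlu Hf]]]]] := poly_facts d0 dk k0 Hll.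
rewrite -/w -/u in u0 Hlu Hf.
have LEf z : @lin_eval p E ('X^d - 1) z = z ^+ (p ^ d) - z.
  by rewrite (lin_evalB charE) (lin_evalXn charE) (lin_eval1 charE).
split.
- move=> [Ly yn].
  have yk : y ^+ (p ^ k) = y.
    have := lin_eval_mul charE l' l y; rewrite Ly (lin_eval_0x charE) mulrC Hll.
    rewrite (lin_evalB charE) (lin_eval1 charE) (lin_evalXn charE) => /eqP.
    by rewrite subr_eq0 => /eqP.
  have yd : y ^+ (p ^ d) = y by apply: frob_gcd.
  have [x hx] := lin_eval_onto charE y u0.
  exists x => //.
  apply/eqP; rewrite -subr_eq0 -LEf Hf (lin_eval_mul charE) hx.
  rewrite (lin_evalB charE) !(lin_eval_mul charE) LEf yd subrr Ly.
  by rewrite !(lin_eval_0x charE) subrr.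
- move=> [x hx ->]; split.
    rewrite -(lin_eval_mul charE) Hlu (lin_evalN charE) (lin_eval_mul charE).
    by rewrite LEf hx subrr (lin_eval_0x charE) oppr0.
  rewrite -(divnK dn) mulnC; apply: frob_iter.
  by rewrite -(lin_eval_frob charE) hx.
Qed.
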